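(* Let $\nu\in(0,\infty)$ and $x\in\mathbb X$. The following are equivalent: (i) there is $c_1>0$ with $\gamma_x(r)\le c_1r^{-\nu}$ for all $r>0$; (ii) there is $c_2>0$ with $\|Ax-Ax_\alpha\|_{\mathbb Y}\le c_2\alpha^{\frac\nu{1+\nu}}$ for all $\alpha>0$ and all $x_\alpha\in R_\alpha(Ax)$. More precisely, (i) implies (ii) with $c_2=4c_1^{\frac1{1+\nu}}$, and (ii) implies (i) with $c_1=c_2^{1+\nu}$.
   Context: Standing setting: $\mathbb X$ real Banach space, $\tau$ a topology with $(\mathbb X,\tau)$ locally convex Hausdorff; $\mathcal R:\mathbb X\to(-\infty,\infty]$ proper convex with $\tau$-compact sublevel sets; $\mathbb Y$ real Hilbert space; $A:\mathbb X\to\mathbb Y$ linear, $\tau$-to-weak continuous. $R_\alpha(g):=\operatorname{argmin}_{x\in\mathrm{dom}(\mathcal R)}(\frac1{2\alpha}\|g-Ax\|_{\mathbb Y}^2+\mathcal R(x))$, $\varrho_1(z):=\sup\{\beta^{-1}\|Az-Az_\beta\|_{\mathbb Y}:\beta>0,z_\beta\in R_\beta(Az)\}$. For $r\ge0$, $B_r:=\{z\in\mathbb X:\varrho_1(z)\le r\}$ and $\gamma_x(r):=\inf_{z\in B_r}\|Ax-Az\|_{\mathbb Y}$. *)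

(* Defs.v *)
From HB Require Import structures.
From mathcomp Require Import all_boot all_order all_algebra.
From mathcomp Require Import all_classical all_reals all_analysis.
Set Implicit Arguments. Unset Strict Implicit. Unset Printing Implicit Defensive.
Import Order.TTheory GRing.Theory Num.Theory.
Import numFieldNormedType.Exports.
Local Open Scope classical_set_scope.
Local Open Scope ring_scope.

(* [ip] is an inner product on the normed space [Y] inducing its norm;
   together with completeness of Y this makes Y a real Hilbert space. *)
Definition is_inner_product (R : realType) (Y : normedModType R)
    (ip : Y -> Y -> R) : Prop :=
  (forall y z, ip y z = ip z y) /\
  (forall (a : R) (y y' z : Y), ip (a *: y + y') z = a * ip y z + ip y' z) /\
  (forall y, ip y y = `|y| ^+ 2).

Definition proper_fun (R : realType) (X : Type) (F : X -> \bar R) : Prop :=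
  (forall x, F x != -oo%E) /\ (exists x, (F x < +oo)%E).

Definition convex_fun (R : realType) (X : lmodType R) (F : X -> \bar R) : Prop :=
  forall (x y : X) (t : R), 0 < t < 1 ->
    (F (t *: x + (1 - t) *: y)%R <= t%:E * F x + (1 - t)%:E * F y)%E.

Definition dom_fun (R : realType) (X : Type) (F : X -> \bar R) : set X :=
  [set x | (F x < +oo)%E].

Definition tikh (R : realType) (X Y : normedModType R) (A : X -> Y)
    (Reg : X -> \bar R) (alpha : R) (g : Y) (x : X) : \bar R :=
  (((2 * alpha)^-1 * `|g - A x| ^+ 2)%:E + Reg x)%E.

Definition Ralpha (R : realType) (X Y : normedModType R) (A : X -> Y)
    (Reg : X -> \bar R) (alpha : R) (g : Y) : set X :=
  [set x | dom_fun Reg x /\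
     forall z, dom_fun Reg z -> (tikh A Reg alpha g x <= tikh A Reg alpha g z)%E].

Definition varrho1 (R : realType) (X Y : normedModType R) (A : X -> Y)
    (Reg : X -> \bar R) (z : X) : \bar R :=
  ereal_sup [set e : \bar R | exists (beta : R) (zb : X),
     0 < beta /\ Ralpha A Reg beta (A z) zb /\
     e = (beta^-1 * `|A z - A zb|)%:E].

Definition Bset (R : realType) (X Y : normedModType R) (A : X -> Y)
    (Reg : X -> \bar R) (r : R) : set X :=
  [set z | (varrho1 A Reg z <= r%:E)%E].

(* gamma_x(r) = inf_{z in B_r} |A x - A z|  (inf of the empty set = +oo) *)
Definition gammax (R : realType) (X Y : normedModType R) (A : X -> Y)
    (Reg : X -> \bar R) (x : X) (r : R) : \bar R :=
  ereal_inf [set (`|A x - A z|)%:E | z in Bset A Reg r].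

(* Main.v *)
Require Import Defs.
From HB Require Import structures.
From mathcomp Require Import all_boot all_order all_algebra.
From mathcomp Require Import all_classical all_reals all_analysis.
From mathcomp Require Import ring lra.
Set Implicit Arguments. Unset Strict Implicit.
Import Order.TTheory GRing.Theory Num.Theory.
Import numFieldNormedType.Exports.
Local Open Scope classical_set_scope.
Local Open Scope ring_scope.

Section IP.
Context (R : realType) (Y : normedModType R) (ip : Y -> Y -> R)
  (hip : is_inner_product ip).

Let ipC y z : ip y z = ip z y. Proof. by case: hip. Qed.
Let ipL a y y' z : ip (a *: y + y') z = a * ip y z + ip y' z.
Proof. by case: hip => _ []. Qed.
Lemma ipnn y : ip y y = `|y| ^+ 2. Proof. by case: hip => _ []. Qed.
Lemma ip0l z : ip 0 z = 0.
Proof. have := ipL 1 0 0 z; rewrite scale1r addr0 mul1r => h; lra. Qed.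
Lemma ipZl a y z : ip (a *: y) z = a * ip y z.
Proof. by have := ipL a y 0 z; rewrite addr0 ip0l addr0. Qed.
Lemma ipDl y y' z : ip (y + y') z = ip y z + ip y' z.
Proof. by have := ipL 1 y y' z; rewrite scale1r mul1r. Qed.
Lemma ipNl y z : ip (- y) z = - ip y z.
Proof. by rewrite -scaleN1r ipZl mulN1r. Qed.
Lemma ipBl y y' z : ip (y - y') z = ip y z - ip y' z.
Proof. by rewrite ipDl ipNl. Qed.
Lemma ipZr a y z : ip y (a *: z) = a * ip y z.
Proof. by rewrite ipC ipZl ipC. Qed.
Lemma ipDr y z z' : ip y (z + z') = ip y z + ip y z'.
Proof. by rewrite ipC ipDl !(ipC y). Qed.
Lemma ipBr y z z' : ip y (z - z') = ip y z - ip y z'.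
Proof. by rewrite ipC ipBl !(ipC y). Qed.
Lemma ipNr y z : ip y (- z) = - ip y z.
Proof. by rewrite ipC ipNl ipC. Qed.
Lemma ip0r z : ip z 0 = 0.
Proof. by rewrite ipC ip0l. Qed.
Lemma normB2 y z : `|y - z| ^+ 2 = `|y| ^+ 2 - 2 * ip y z + `|z| ^+ 2.
Proof. rewrite -!ipnn ipBl !ipBr (ipC z y); lra. Qed.
Lemma amgm y z : 2 * ip y z <= `|y| ^+ 2 + `|z| ^+ 2.
Proof. have := normB2 y z; have := sqr_ge0 `|y - z|; lra. Qed.
Lemma ipCS y z : ip y z <= `|y| * `|z|.
Proof.
have [->|y0] := eqVneq y 0; first by rewrite ip0l normr0 mul0r.
have [->|z0] := eqVneq z 0; first by rewrite ip0r normr0 mulr0.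
have ny : 0 < `|y| by rewrite normr_gt0.
have nz : 0 < `|z| by rewrite normr_gt0.
have := amgm (`|y|^-1 *: y) (`|z|^-1 *: z).
rewrite ipZl ipZr !normrZ !normfV !normr_id !mulVf ?gt_eqF // expr1n => h.
have -> : ip y z = (`|y| * `|z|) * (`|y|^-1 * (`|z|^-1 * ip y z)).
  by field; rewrite !gt_eqF.
have := mulr_gt0 ny nz; nra.
Qed.
End IP.

Lemma small_le0 (R : realType) (D K : R) : 0 <= K ->
  (forall t, 0 < t < 1 -> D <= t * K) -> D <= 0.
Proof.
move=> K0 h; rewrite leNgt; apply/negP => D0.
pose t := D / (2 * (D + K)).
have DK : 0 < D + K by lra.
have e : t * (2 * (D + K)) = D by rewrite /t; field; rewrite gt_eqF.
have t0 : 0 < t by rewrite /t divr_gt0 // mulr_gt0.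
have t1 : t < 1.
  have : t * (2 * (D + K)) < 1 * (2 * (D + K)) by rewrite e mul1r; lra.
  by rewrite ltr_pM2r // mulr_gt0.
have := h t; rewrite t0 t1 => /(_ isT) h'.
have : 0 < t * D by apply: mulr_gt0.
have : 0 <= t * K by apply: mulr_ge0 => //; lra.
nra.
Qed.

Lemma first_order (R : realType) (X : normedModType R) (Y : normedModType R)
  (ip : Y -> Y -> R) (hip : is_inner_product ip) (A : {linear X -> Y})
  (Reg : X -> \bar R) (hRconv : convex_fun Reg) (alpha : R) (g : Y) (xa w : X)
  (rx rw : R) :
  0 < alpha -> Ralpha A Reg alpha g xa -> Reg xa = rx%:E -> Reg w = rw%:E ->
  ip (g - A xa) (A w - A xa) <= alpha * (rw - rx).
Proof.
move=> a0 [_ hmin] Rxa Rw.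
rewrite -subr_le0.
apply: (@small_le0 _ _ (`|A w - A xa| ^+ 2 / 2)).
  by rewrite divr_ge0 // sqr_ge0.
move=> t /andP[t0 t1].
set wt := t *: w + (1 - t) *: xa.
have cv := hRconv w xa t; rewrite t0 t1 Rw Rxa in cv.
have {}cv := cv isT.
rewrite -!EFinM -EFinD in cv.
have dwt : dom_fun Reg wt by rewrite /dom_fun /=; exact: (le_lt_trans cv (ltry _)).
have := hmin wt dwt; rewrite /tikh Rxa => h.
have {h}h := le_trans h (leeD2l _ cv).
rewrite -!EFinD lee_fin in h.
have eA : g - A wt = (g - A xa) - t *: (A w - A xa).
  rewrite /wt linearD !linearZ /=.
  rewrite scalerBl scale1r scalerN scalerBr; set u := t *: A w; set v := t *: A xa.
  by rewrite !opprD !opprK !addrA (addrAC g (- u)).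

rewrite eA (normB2 hip (g - A xa)) (ipZr hip) normrZ (ger0_norm (ltW t0)) in h.
set I := ip (g - A xa) (A w - A xa) in h *.
set B := `|A w - A xa| in h *.
set a := `|g - A xa| in h *.
have ia : 0 < (2 * alpha)^-1 by rewrite invr_gt0 mulr_gt0.
have e2 : (2 * alpha)^-1 * (2 * alpha) = 1 by rewrite mulVf // gt_eqF // mulr_gt0.
have h1 : 0 <= (2 * alpha)^-1 * (- 2 * t * I + (t * B) ^+ 2) + t * (rw - rx).
  have e3 : (2 * alpha)^-1 * (a ^+ 2 - 2 * (t * I) + (t * B) ^+ 2) + (t * rw + (1 - t) * rx)
    - ((2 * alpha)^-1 * a ^+ 2 + rx) =
    (2 * alpha)^-1 * (- 2 * t * I + (t * B) ^+ 2) + t * (rw - rx) by ring.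
  lra.
have h2 : 0 <= (- 2 * t * I + (t * B) ^+ 2) + 2 * alpha * t * (rw - rx).
  have e4 : (2 * alpha) * ((2 * alpha)^-1 * (- 2 * t * I + (t * B) ^+ 2) + t * (rw - rx))
    = (- 2 * t * I + (t * B) ^+ 2) + 2 * alpha * t * (rw - rx).
    by field; rewrite gt_eqF.
  by rewrite -e4 mulr_ge0 // ltW // mulr_gt0.
have e5 : (- 2 * t * I + (t * B) ^+ 2) + 2 * alpha * t * (rw - rx) =
  t * (- 2 * I + t * B ^+ 2 + 2 * alpha * (rw - rx)) by ring.
rewrite e5 pmulr_rge0 // in h2.
have -> : t * (B ^+ 2 / 2) = (t * B ^+ 2) / 2 by ring.
lra.
Qed.

Lemma fin_of_dom (R : realType) (X : Type) (Reg : X -> \bar R) x :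
  proper_fun Reg -> dom_fun Reg x -> exists r : R, Reg x = r%:E.
Proof.
move=> [hn _]; rewrite /dom_fun /=; move: (hn x).
by case: (Reg x) => [r| |] //= _ _; exists r.
Qed.

Lemma est (R : realType) (X : normedModType R) (Y : normedModType R)
  (ip : Y -> Y -> R) (hip : is_inner_product ip) (A : {linear X -> Y})
  (Reg : X -> \bar R) (hRprop : proper_fun Reg) (hRconv : convex_fun Reg)
  (alpha beta : R) (g : Y) (xa zb : X) :
  0 < alpha -> 0 < beta -> Ralpha A Reg alpha g xa ->
  Ralpha A Reg beta (A xa) zb ->
  alpha * `|A xa - A zb| <= beta * `|g - A xa|.
Proof.
move=> a0 b0 hxa hzb.
have [rx Rx] := fin_of_dom hRprop hxa.1.
have [rz Rz] := fin_of_dom hRprop hzb.1.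
have h1 := first_order hip hRconv a0 hxa Rx Rz.
have h2 := first_order hip hRconv b0 hzb Rz Rx.
rewrite (ipnn hip) in h2.
rewrite -(opprB (A xa) (A zb)) (ipNr hip) in h1.
have h3 := amgm hip (beta *: (g - A xa)) (alpha *: (A xa - A zb)).
rewrite (ipZl hip) (ipZr hip) !normrZ !(ger0_norm (ltW _)) // in h3.
set I := ip (g - A xa) (A xa - A zb) in h1 h3.
set d := `|A xa - A zb| in h2 h3 *.
set w := `|g - A xa| in h3 *.
have d0 : 0 <= d by apply: normr_ge0.
have w0 : 0 <= w by apply: normr_ge0.
have h4 : alpha * d ^+ 2 <= beta * I.
  have : alpha * d ^+ 2 <= alpha * (beta * (rx - rz)) by rewrite ler_pM2l.
  have : beta * (- I) <= beta * (alpha * (rz - rx)) by rewrite ler_pM2l.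
  nra.
have h5 : (alpha * d) ^+ 2 <= (beta * w) ^+ 2.
  have : alpha * (alpha * d ^+ 2) <= alpha * (beta * I) by rewrite ler_pM2l.
  nra.
have ad : 0 <= alpha * d by apply: mulr_ge0 => //; lra.
have bw : 0 <= beta * w by apply: mulr_ge0 => //; lra.
nra.
Qed.

Lemma varrho_est (R : realType) (X : normedModType R) (Y : normedModType R)
  (ip : Y -> Y -> R) (hip : is_inner_product ip) (A : {linear X -> Y})
  (Reg : X -> \bar R) (hRprop : proper_fun Reg) (hRconv : convex_fun Reg)
  (alpha : R) (g : Y) (xa : X) :
  0 < alpha -> Ralpha A Reg alpha g xa ->
  (varrho1 A Reg xa <= (alpha^-1 * `|g - A xa|)%:E)%E.
Proof.
move=> a0 hxa; apply: ge_ereal_sup => _ [beta [zb [b0 [hzb ->]]]].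
rewrite lee_fin.
have := est hip hRprop hRconv a0 b0 hxa hzb => hh.
rewrite -(ler_pM2l (mulr_gt0 a0 b0)).
have -> : alpha * beta * (beta^-1 * `|A xa - A zb|) = alpha * `|A xa - A zb|.
  by field; rewrite gt_eqF.
have -> : alpha * beta * (alpha^-1 * `|g - A xa|) = beta * `|g - A xa|.
  by field; rewrite gt_eqF.
by [].
Qed.

Lemma Br_step (R : realType) (X : normedModType R) (Y : normedModType R)
  (ip : Y -> Y -> R) (hip : is_inner_product ip) (A : {linear X -> Y})
  (Reg : X -> \bar R) (hRconv : convex_fun Reg)
  (r beta : R) (z zb w : X) (rz rw : R) :
  0 < beta -> (varrho1 A Reg z <= r%:E)%E -> Ralpha A Reg beta (A z) zb ->
  Reg zb = rz%:E -> Reg w = rw%:E ->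
  `|A z - A zb| <= beta * r /\ rz - rw <= r * `|A zb - A w|.
Proof.
move=> b0 hz hzb Rz Rw.
have h1 : `|A z - A zb| <= beta * r.
  have : ((beta^-1 * `|A z - A zb|)%:E <= r%:E)%E.
    apply: le_trans hz; apply: ereal_sup_ubound.
    by exists beta, zb.
  rewrite lee_fin -(ler_pM2l b0) mulrA mulfV ?gt_eqF // mul1r.
  by [].
split => //.
have h2 := first_order hip hRconv b0 hzb Rz Rw.
rewrite -(opprB (A zb) (A w)) (ipNr hip) in h2.
have h3 := ipCS hip (A z - A zb) (A zb - A w).
have n0 : 0 <= `|A zb - A w| by [].
have h4 : `|A z - A zb| * `|A zb - A w| <= beta * r * `|A zb - A w|.
  by rewrite ler_wpM2r.
have : beta * (rz - rw) <= beta * (r * `|A zb - A w|) by lra.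
by rewrite ler_pM2l.
Qed.

Lemma key_i_ii (R : realType) (X : normedModType R) (Y : normedModType R)
  (ip : Y -> Y -> R) (hip : is_inner_product ip) (A : {linear X -> Y})
  (Reg : X -> \bar R) (hRprop : proper_fun Reg) (hRconv : convex_fun Reg)
  (alpha r beta : R) (g : Y) (xa z zb : X) :
  0 < alpha -> 0 < r -> 0 < beta -> Ralpha A Reg alpha g xa ->
  (varrho1 A Reg z <= r%:E)%E -> Ralpha A Reg beta (A z) zb ->
  `|g - A xa| <= `|g - A z| + beta * r + 2 * alpha * r.
Proof.
move=> a0 r0 b0 hxa hz hzb.
have [rx Rx] := fin_of_dom hRprop hxa.1.
have [rz Rz] := fin_of_dom hRprop hzb.1.
have [h1 h2] := Br_step hip hRconv b0 hz hzb Rz Rx.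
have := hxa.2 zb hzb.1; rewrite /tikh Rx Rz -!EFinD lee_fin => hm.
have t1 := ler_distD g (A zb) (A xa).
have t2 := ler_distD (A z) g (A zb).
set a := `|g - A xa| in hm t1 *.
set d := `|g - A zb| in hm t1 t2.
have e1 : `|A zb - g| = d by rewrite distrC.
rewrite e1 in t1.
have a0' : 0 <= a by apply: normr_ge0.
have d0 : 0 <= d by apply: normr_ge0.
have hm2 : a ^+ 2 <= d ^+ 2 + 2 * alpha * (rz - rx).
  have e : (2 * alpha) * ((2 * alpha)^-1 * d ^+ 2 + rz - ((2 * alpha)^-1 * a ^+ 2 + rx))
    = d ^+ 2 + 2 * alpha * (rz - rx) - a ^+ 2 by field; rewrite gt_eqF.
  have : 0 <= (2 * alpha) * ((2 * alpha)^-1 * d ^+ 2 + rz - ((2 * alpha)^-1 * a ^+ 2 + rx)).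
    apply: mulr_ge0; first by lra. lra.
  rewrite e; lra.
have h3 : alpha * (rz - rx) <= alpha * (r * (d + a)).
  rewrite ler_pM2l //; apply: (le_trans h2); rewrite ler_pM2l //.
set s := alpha * r.
have s0 : 0 <= s by apply: mulr_ge0; lra.
have e : alpha * (r * (d + a)) = s * d + s * a by rewrite /s; ring.
rewrite e in h3.
have h5 : (a - s) ^+ 2 <= (d + s) ^+ 2 by nra.
have h4 : a - s <= d + s.
  rewrite leNgt; apply/negP => hc.
  have : (d + s) * (d + s) < (a - s) * (a - s).
    apply: ltr_pM => //; lra.
  rewrite -!expr2; lra.
rewrite -mulrA -/s; lra.
Qed.

Lemma lsc_q (R : realType) (X : normedModType R) (Xt : tvsType R) (j : Xt -> X)
  (Y : normedModType R) (ip : Y -> Y -> R) (hip : is_inner_product ip)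
  (A : {linear X -> Y})
  (hAcont : forall y : Y, continuous (fun u : Xt => ip (A (j u)) y))
  (g : Y) (p : Xt) (t : R) :
  t < `|g - A (j p)| ^+ 2 -> nbhs p [set u | t < `|g - A (j u)| ^+ 2].
Proof.
move=> ht.
set y := g - A (j p).
set a := ip g y - (t + `|y| ^+ 2) / 2.
have hp : ip (A (j p)) y < a.
  have e : ip (A (j p)) y = ip g y - `|y| ^+ 2.
    have e2 : ip y y = ip g y - ip (A (j p)) y by rewrite {1}/y (ipBl hip).
    rewrite -(ipnn hip) e2; lra.
  rewrite e /a; lra.
have H := hAcont y p.
have := H [set z | z < a] (lt_nbhsl hp).
move=> hh.
have hh2 : nbhs p [set u | ip (A (j u)) y < a] := hh.
apply: filterS hh2 => u /= hu.
have h := amgm hip (g - A (j u)) y.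
rewrite (ipBl hip) in h.
rewrite /a in hu.
lra.
Qed.

Lemma F_fin (R : realType) (a c : R) (Rg : \bar R) :
  ((a%:E + Rg) <= c%:E)%E -> Rg != -oo%E -> exists rho : R, Rg = rho%:E /\ a + rho <= c.
Proof.
case: Rg => [rho| |] //= h _; exists rho; split => //.

Qed.

Lemma sub_closed (R : realType) (X : normedModType R) (Xt : tvsType R) (j : Xt -> X)
  (Reg : X -> \bar R)
  (Y : normedModType R) (ip : Y -> Y -> R) (hip : is_inner_product ip)
  (A : {linear X -> Y}) (hXt : hausdorff_space Xt)
  (hRprop : proper_fun Reg)
  (hRcomp : forall c : R, compact (j @^-1` [set x | (Reg x <= c%:E)%E]))
  (hAcont : forall y : Y, continuous (fun u : Xt => ip (A (j u)) y))
  (beta : R) (g : Y) (c : R) : 0 < beta ->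
  closed [set u : Xt | (tikh A Reg beta g (j u) <= c%:E)%E].
Proof.
move=> b0 p hp /=.
have Kcl s : closed (j @^-1` [set x | (Reg x <= s%:E)%E]).
  exact: compact_closed hXt (hRcomp s).
have ib : 0 < (2 * beta)^-1 by rewrite invr_gt0 mulr_gt0.
rewrite leNgt; apply/negP => hc.
move: hc; rewrite /tikh.
case E: (Reg (j p)) => [rho| |] hc.
- rewrite -EFinD lte_fin in hc.
  set qp := `|g - A (j p)| ^+ 2 in hc.
  set e := ((2 * beta)^-1 * qp + rho - c) / 2.
  have e0 : 0 < e by rewrite /e; lra.
  have N1 : nbhs p (~` (j @^-1` [set x | (Reg x <= (rho - e)%:E)%E])).
    apply: open_nbhs_nbhs; split; first exact: closed_openC.
    by rewrite /= E lee_fin; lra.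
  have ht : qp - 2 * beta * e < `|g - A (j p)| ^+ 2.
    have : 0 < 2 * beta * e by rewrite mulr_gt0 // mulr_gt0.
    rewrite /qp; lra.
  have N2 := lsc_q hip hAcont ht.
  have [u [Du [N1u N2u]]] := hp _ (filterI N1 N2).
  move: Du; rewrite /= /tikh => Du.
  have [ru [Ru hu]] := F_fin Du (proj1 hRprop _).
  rewrite /= Ru lee_fin in N1u.
  move/negP: N1u; rewrite -ltNge => N1u.
  move: N2u => /= N2u.
  have : (2 * beta)^-1 * (qp - 2 * beta * e) < (2 * beta)^-1 * `|g - A (j u)| ^+ 2.
    by rewrite ltr_pM2l.
  have -> : (2 * beta)^-1 * (qp - 2 * beta * e) = (2 * beta)^-1 * qp - e.
    by field; rewrite gt_eqF.
  have ee : 2 * e = (2 * beta)^-1 * qp + rho - c by rewrite /e mulrC divfK // pnatr_eq0.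
  move=> hh; lra.
- have N1 : nbhs p (~` (j @^-1` [set x | (Reg x <= c%:E)%E])).
    apply: open_nbhs_nbhs; split; first exact: closed_openC.
    by rewrite /= E.
  have [u [Du N1u]] := hp _ N1.
  apply: N1u; apply: le_trans Du; rewrite /tikh.
  by apply: leeDr; rewrite lee_fin mulr_ge0 // ?sqr_ge0 // ltW.
- by move: (proj1 hRprop (j p)); rewrite E.
Qed.

Lemma exist_min (R : realType) (X : normedModType R) (Xt : tvsType R) (j : Xt -> X)
  (Reg : X -> \bar R)
  (Y : normedModType R) (ip : Y -> Y -> R) (hip : is_inner_product ip)
  (A : {linear X -> Y}) (hXt : hausdorff_space Xt) (hj : bijective j)
  (hRprop : proper_fun Reg)
  (hRcomp : forall c : R, compact (j @^-1` [set x | (Reg x <= c%:E)%E]))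
  (hAcont : forall y : Y, continuous (fun u : Xt => ip (A (j u)) y))
  (beta : R) (g : Y) : 0 < beta -> exists xm, Ralpha A Reg beta g xm.
Proof.
move=> b0.
have [jinv jK Kj] := hj.
pose F := fun u => tikh A Reg beta g (j u).
have ib : 0 < (2 * beta)^-1 by rewrite invr_gt0 mulr_gt0.
have Fval z rz : Reg z = rz%:E -> F (jinv z) = ((2 * beta)^-1 * `|g - A z| ^+ 2 + rz)%:E.
  by move=> Rz; rewrite /F /tikh Kj Rz EFinD.
pose D := [set c : R | exists u, (F u <= c%:E)%E].
pose B := fun c : R => [set u | (F u <= c%:E)%E].
have [x0 dx0] := proj2 hRprop.
have [r0 R0] := fin_of_dom hRprop dx0.
pose c0 := (2 * beta)^-1 * `|g - A x0| ^+ 2 + r0.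
have Dc0 : D c0 by exists (jinv x0); rewrite (Fval _ _ R0).
have FF : Filter (filter_from D B).
  apply: filter_from_filter; first by exists c0.
  move=> i k Di Dk; have [ik|ki] := leP i k.
  - exists i => // u /= hu; split => //; apply: le_trans hu _; by rewrite lee_fin.
  - exists k => // u /= hu; split => //; apply: le_trans hu _; rewrite lee_fin; exact: ltW.
have PF : ProperFilter (filter_from D B).
  by apply: filter_from_proper => // i [u hu]; exists u.
have K0 : compact (B c0).
  apply: (subclosed_compact (@sub_closed _ _ _ _ _ _ _ hip A hXt hRprop hRcomp hAcont beta g c0 b0) (hRcomp c0)).
  move=> u; rewrite /B /= => h; apply: le_trans h; rewrite /F /tikh.
  by apply: leeDr; rewrite lee_fin mulr_ge0 // ?sqr_ge0 // ltW.
have [p [Bp clp]] := K0 _ PF (ex_intro2 _ _ c0 Dc0 (@subset_refl _ (B c0))).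
have Pmin c : D c -> (F p <= c%:E)%E.
  move=> Dc; apply: (@sub_closed _ _ _ _ _ _ _ hip A hXt hRprop hRcomp hAcont beta g c b0).
  move=> N Np; exact: clp (B c) N (ex_intro2 _ _ c Dc (@subset_refl _ (B c))) Np.
exists (j p); split.
  have [rp [Rp _]] := F_fin Bp (proj1 hRprop _).
  by rewrite /dom_fun /= Rp ltry.
move=> z dz; have [rz Rz] := fin_of_dom hRprop dz.
have := Pmin ((2 * beta)^-1 * `|g - A z| ^+ 2 + rz).
rewrite -(Fval _ _ Rz) /F Kj; apply.
by exists (jinv z); rewrite (Fval _ _ Rz).
Qed.
Lemma powRD' (R : realType) (a s t : R) : 0 < a -> a `^ (s + t) = a `^ s * a `^ t.
Proof. by move=> a0; rewrite powRD //; apply/implyP => _; rewrite gt_eqF. Qed.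

Lemma powRV' (R : realType) (a s : R) : 0 < a -> (a^-1) `^ s = a `^ (- s).
Proof.
move=> a0; rewrite powRN.
have h : (a^-1) `^ s * a `^ s = 1.
  by rewrite -powRM ?invr_ge0 ?ltW // mulVf ?gt_eqF // powR1.
have hs : 0 < a `^ s by apply: powR_gt0.
have hs1 : a `^ s != 0 by rewrite gt_eqF.
by rewrite -[LHS]mulr1 -(mulfV hs1) mulrA h mul1r.
Qed.

Lemma pow_iii (R : realType) (c2 r nu : R) : 0 < c2 -> 0 < r -> 0 < nu ->
  let al := (c2 / r) `^ (1 + nu) in
  al `^ (nu / (1 + nu)) = (c2 / r) `^ nu /\
  al = (c2 / r) * (c2 / r) `^ nu /\
  c2 `^ (1 + nu) * r `^ (- nu) = c2 * (c2 / r) `^ nu.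
Proof.
move=> c0 r0 n0 al.
have q0 : 0 < c2 / r by rewrite divr_gt0.
split; first by rewrite /al -powRrM; congr (_ `^ _); field; rewrite gt_eqF // ltr_wpDr // ltW.
split; first by rewrite /al powRD' // powRr1 // ltW.
rewrite powRD' // powRr1 ?ltW // powRM ?invr_ge0 ?ltW // powRV' //.
by rewrite mulrA.
Qed.

Lemma pow_ii (R : realType) (c1 al nu : R) : 0 < c1 -> 0 < al -> 0 < nu ->
  let p := 1 / (1 + nu) in
  let C := c1 `^ p * al `^ (nu / (1 + nu)) in
  let r := c1 `^ p * al `^ (- p) in
  al * r = C /\ c1 * r `^ (- nu) = C.
Proof.
move=> c0 a0 n0 p C r.
have n1 : 1 + nu != 0 by rewrite gt_eqF // ltr_wpDr // ltW.
split.
  rewrite /r mulrCA -{1}(powRr1 (ltW a0)) -powRD' //.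
  by rewrite /C; congr (_ * _ `^ _); rewrite /p; field; exact: n1.
rewrite /r powRM ?powR_ge0 // -!powRrM mulrA -{1}(powRr1 (ltW c0)) -powRD' //.
rewrite /C /p; congr (_ `^ _ * _ `^ _); field.
all: exact: n1.
Qed.

Unset Implicit Arguments. Set Strict Implicit.

Theorem proposition4p9
  (R : realType)
  (X : completeNormedModType R)               (* Banach space X *)
  (Xt : tvsType R)                            (* (X, tau): locally convex *)
  (j : {linear Xt -> X})                      (* identity (X,tau) -> X *)
  (Reg : X -> \bar R)
  (Y : completeNormedModType R) (ip : Y -> Y -> R)
  (A : {linear X -> Y})
  (hXt : hausdorff_space Xt) (hj : bijective j)
  (hip : is_inner_product ip)
  (hRprop : proper_fun Reg) (hRconv : convex_fun Reg)
  (hRcomp : forall c : R, compact (j @^-1` [set x | (Reg x <= c%:E)%E]))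
  (hAcont : forall y : Y, continuous (fun u : Xt => ip (A (j u)) y))
  (nu : R) (hnu : 0 < nu) (x : X) :
  let cond_i (c1 : R) := forall r : R, 0 < r ->
      (gammax A Reg x r <= (c1 * r `^ (- nu))%:E)%E in
  let cond_ii (c2 : R) := forall alpha : R, 0 < alpha ->
      forall xa : X, Ralpha A Reg alpha (A x) xa ->
      `|A x - A xa| <= c2 * alpha `^ (nu / (1 + nu)) in
  ((exists2 c1 : R, 0 < c1 & cond_i c1) <-> (exists2 c2 : R, 0 < c2 & cond_ii c2)) /\
  (forall c1 : R, 0 < c1 -> cond_i c1 -> cond_ii (4 * c1 `^ (1 / (1 + nu)))) /\
  (forall c2 : R, 0 < c2 -> cond_ii c2 -> cond_i (c2 `^ (1 + nu))).
Proof.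
move=> cond_i cond_ii.
have EX := @exist_min _ _ _ j Reg _ _ hip A hXt hj hRprop hRcomp hAcont.
have I2 : forall c1 : R, 0 < c1 -> cond_i c1 -> cond_ii (4 * c1 `^ (1 / (1 + nu))).
  move=> c1 c0 hi al a0 xa hxa.
  have [e1 e2] := pow_ii c0 a0 hnu.
  set p := 1 / (1 + nu) in e1 e2 *.
  set C := c1 `^ p * al `^ (nu / (1 + nu)) in e1 e2 *.
  set r := c1 `^ p * al `^ (- p) in e1 e2.
  have r0 : 0 < r by rewrite mulr_gt0 // powR_gt0.
  have C0 : 0 < C by rewrite mulr_gt0 // powR_gt0.
  have hg := hi r r0; rewrite e2 in hg.
  have : (gammax A Reg x r < (C + C / 2)%:E)%E.
    by apply: (le_lt_trans hg); rewrite lte_fin; lra.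
  move=> /ereal_inf_lt [_ [z Bz <-]]; rewrite lte_fin => hz.
  have b0 : 0 < al / 2 by lra.
  have [zb hzb] := EX (al / 2) (A z) b0.
  have := key_i_ii hip hRprop hRconv a0 r0 b0 hxa Bz hzb.
  have -> : al / 2 * r = C / 2 by rewrite -e1; ring.
  rewrite -mulrA e1 => hk.
  have -> : 4 * c1 `^ p * al `^ (nu / (1 + nu)) = 4 * C by rewrite /C; ring.
  lra.
have I3 : forall c2 : R, 0 < c2 -> cond_ii c2 -> cond_i (c2 `^ (1 + nu)).
  move=> c2 c0 hii r r0.
  have [e1 [e2 e3]] := pow_iii c0 r0 hnu.
  set P := (c2 / r) `^ nu in e1 e2 e3.
  set al := (c2 / r) `^ (1 + nu) in e1 e2.
  have a0 : 0 < al by rewrite powR_gt0 // divr_gt0.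
  have [xa hxa] := EX al (A x) a0.
  have ha := hii al a0 xa hxa; rewrite e1 in ha.
  rewrite e3.
  apply: le_trans (_ : ((`|A x - A xa|)%:E <= _)%E); last by rewrite lee_fin.
  apply: ereal_inf_lbound; exists xa => //.
  rewrite /Bset /=.
  apply: (le_trans (varrho_est hip hRprop hRconv a0 hxa)); rewrite lee_fin.
  have h1 : al^-1 * `|A x - A xa| <= al^-1 * (c2 * P) by rewrite ler_pM2l // invr_gt0.
  apply: (le_trans h1).
  have -> : c2 * P = al * r by rewrite e2; field; rewrite gt_eqF.
  by rewrite mulKf // gt_eqF.
split; last by split.
split.
- move=> [c1 c0 hi]; exists (4 * c1 `^ (1 / (1 + nu))); last exact: I2.
  by rewrite mulr_gt0 // powR_gt0.
- move=> [c2 c0 hii]; exists (c2 `^ (1 + nu)); last exact: I3.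
  by rewrite powR_gt0.
Qed.
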